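(* In the setup below, let $V\subseteq K_2^T(C)$ be the subgroup generated by all elements $R(i;j,k|l;m,n)$ and $T(i,j|k,l|m,n)$. Then $V$ is generated by the elements $R(1;1,j\,|\,2;1,m)$ for $1<j\le N_1$, $1<m\le N_2$; $T(1,1\,|\,k,l\,|\,m,n)$ for $2\le k<m\le N$, $1\le l\le N_k$, $1\le n\le N_m$; $T(1,j\,|\,2,1\,|\,m,n)$ for $2\le j\le N_1$, $3\le m\le N$, $1\le n\le N_m$. (The number of these generators equals $\sum_{1\le i<k\le N}N_iN_k-\sum_{i}N_i+1$.)
   Context: Let $K$ be a field, $N\ge2$, $N_1,\dots,N_N\ge1$. For $1\le i\le N$, $1\le j\le N_i$ let $L_{i,j}=a_ix+b_iy+c_{i,j}$ with $a_i,b_i,c_{i,j}\in K$, $(a_i,b_i)\ne(0,0)$, such that the affine lines $L_{i,j}=0$ are pairwise distinct and $[i,k]:=a_ib_k-a_kb_i\neq0$ for $i\neq k$. For $\lambda\in K^*$ put $f(x,y)=\lambda\prod_{i,j}L_{i,j}-1$; let $C$ be the normalisation of the projective closure of the (irreducible) affine curve $f=0$ and $F$ its function field, with the $L_{i,j}$ viewed in $F^*$. $K_2(F)$ is the abelian group generated by symbols $\{a,b\}$, bimultiplicative and with $\{a,1-a\}=0$; $K_2^T(C)$ is the kernel of the sum of the tame symbols $T_x(\{a,b\})=(-1)^{\mathrm{ord}_x a\,\mathrm{ord}_x b}(a^{\mathrm{ord}_x b}/b^{\mathrm{ord}_x a})(x)$ over all closed points $x$ of $C$. Define $R(i;j,k\,|\,l;m,n)=\{L_{i,j}/L_{i,k},\,L_{l,m}/L_{l,n}\}$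 ($i\ne l$) and $T(i,j\,|\,k,l\,|\,m,n)=\Bigl\{\frac{[i,m]}{[k,m]}\frac{L_{k,l}}{L_{i,j}},\,\frac{[i,k]}{[m,k]}\frac{L_{m,n}}{L_{i,j}}\Bigr\}$ ($i,k,m$ pairwise distinct); these lie in $K_2^T(C)$. *)

(* Defs.v *)
From HB Require Import structures.
From mathcomp Require Import all_boot all_order all_algebra.
Set Implicit Arguments. Unset Strict Implicit. Unset Printing Implicit Defensive.
Import Order.TTheory GRing.Theory Num.Theory.
Local Open Scope ring_scope.

(* Indices are 1-based natural numbers as in the paper:
   1 <= i <= N, 1 <= j <= Ns i. *)

Section Defs.
Variables (K F : fieldType) (iota : {rmorphism K -> F}).
Variables (a b : nat -> K) (c : nat -> nat -> K).

Definition br (i k : nat) : K := a i * b k - a k * b i.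

(* L_{i,j} as a bivariate polynomial in {poly {poly K}}:
   the inner variable is x, the outer variable is y. *)
Definition Lpoly (i j : nat) : {poly {poly K}} :=
  ((a i)%:P * 'X + (c i j)%:P)%:P + (b i)%:P%:P * 'X.

Definition fpoly (N : nat) (Ns : nat -> nat) (lam : K) : {poly {poly K}} :=
  lam%:P%:P * \prod_(1 <= i < N.+1) \prod_(1 <= j < (Ns i).+1) Lpoly i j - 1.

Definition eval2 (x y : F) (p : {poly {poly K}}) : F :=
  (map_poly (fun q : {poly K} => (map_poly iota q).[x]) p).[y].

Definition LF (x y : F) (i j : nat) : F :=
  iota (a i) * x + iota (b i) * y + iota (c i j).

(* Steinberg symbols on F^* with values in an abelian group G.
   K_2(F) is (Matsumoto) the target of the universal such symbol. *)
Definition steinberg (G : zmodType) (s : F -> F -> G) : Prop :=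
  [/\ forall u v w, u != 0 -> v != 0 -> w != 0 -> s (u * v) w = s u w + s v w,
      forall u v w, u != 0 -> v != 0 -> w != 0 -> s u (v * w) = s u v + s u w
    & forall u, u != 0 -> u != 1 -> s u (1 - u) = 0].

Variables (x y : F) (G : zmodType) (s : F -> F -> G).

Definition Rsym (i j k l m n : nat) : G :=
  s (LF x y i j / LF x y i k) (LF x y l m / LF x y l n).

Definition Tsym (i j k l m n : nat) : G :=
  s (iota (br i m / br k m) * (LF x y k l / LF x y i j))
    (iota (br i k / br m k) * (LF x y m n / LF x y i j)).

End Defs.

Definition in_span (G : zmodType) (P : G -> Prop) (v : G) : Prop :=
  exists t : seq (int * G),
    (forall p, p \in t -> P p.2) /\ v = \sum_(p <- t) p.2 *~ p.1.

(* Main.v *)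
Require Import Defs.
From HB Require Import structures.
From mathcomp Require Import all_boot all_order all_algebra.
From mathcomp Require Import ring zify.
Set Implicit Arguments. Unset Strict Implicit. Unset Printing Implicit Defensive.
Import Order.TTheory GRing.Theory Num.Theory.
Local Open Scope ring_scope.
Section Stein.
Variables (F : fieldType) (G : zmodType) (s : F -> F -> G) (hs : steinberg s).

Lemma sMl u v w : u != 0 -> v != 0 -> w != 0 -> s (u * v) w = s u w + s v w.
Proof. by case: hs => h _ _; apply: h. Qed.
Lemma sMr u v w : u != 0 -> v != 0 -> w != 0 -> s u (v * w) = s u v + s u w.
Proof. by case: hs => _ h _; apply: h. Qed.
Lemma s1l w : w != 0 -> s 1 w = 0.
Proof. move=> hw; have := sMl (oner_neq0 F) (oner_neq0 F) hw.
by rewrite mulr1 -{1}[s 1 w]addr0 => /addrI <-. Qed.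
Lemma s1r w : w != 0 -> s w 1 = 0.
Proof. move=> hw; have := sMr hw (oner_neq0 F) (oner_neq0 F).
by rewrite mulr1 -{1}[s w 1]addr0 => /addrI <-. Qed.
Lemma sVl u w : u != 0 -> w != 0 -> s u^-1 w = - s u w.
Proof. move=> hu hw; apply/eqP; rewrite -addr_eq0 -sMl ?invr_eq0 //.
by rewrite mulVf // s1l. Qed.
Lemma sVr u w : u != 0 -> w != 0 -> s w u^-1 = - s w u.
Proof. move=> hu hw; apply/eqP; rewrite -addr_eq0 -sMr ?invr_eq0 //.
by rewrite mulVf // s1r. Qed.
Lemma s1m u : u != 0 -> u != 1 -> s u (1 - u) = 0.
Proof. by case: hs => _ _ h; apply: h. Qed.
Lemma sNself u : u != 0 -> s u (- u) = 0.
Proof.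
move=> hu; have [->|hu1] := eqVneq u 1; first by rewrite s1l ?oppr_eq0 ?oner_eq0.
have h1 : 1 - u != 0 by rewrite subr_eq0 eq_sym.
have hui : u^-1 != 1 by rewrite invr_eq1.
have h2 : 1 - u^-1 != 0 by rewrite subr_eq0 eq_sym.
have -> : - u = (1 - u) * (1 - u^-1)^-1.
  apply: (mulIf h2); rewrite mulfVK // mulrBr mulr1 mulNr mulfV //; ring.
rewrite sMr ?invr_eq0 // sVr // s1m // add0r.
by rewrite -{1}(invrK u) sVl ?invr_eq0 // s1m ?invr_eq0 // !oppr0.
Qed.
Lemma santi u v : u != 0 -> v != 0 -> s v u = - s u v.
Proof.
move=> hu hv; have huv : u * v != 0 by rewrite mulf_neq0.
have := sNself huv; rewrite sMl //; last by rewrite oppr_eq0.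
rewrite {1}(_ : - (u * v) = (- u) * v); last by rewrite mulNr.
rewrite (_ : - (u * v) = u * (- v)); last by rewrite mulrN.
rewrite !sMr ?oppr_eq0 // !sNself // add0r addr0.
by move/eqP; rewrite addr_eq0 => /eqP ->; rewrite opprK.
Qed.
End Stein.

Section Gram.
Variables (G : zmodType) (Gm : nat -> nat -> G).
Hypothesis hanti : forall i j, Gm j i = - Gm i j.
Hypothesis hdiag : forall i, Gm i i = Gm 0 i.

Definition evenz (z : int) : bool := (z %% 2)%Z == 0.

Definition condM (M : nat -> nat -> int) (n : nat) : bool :=
  if n is n'.+1 then
    evenz (M 0%N n - M n 0%N + M n n) && all (fun i => M i n == M n i) (iota 1 n')
  else evenz (M 0%N 0%N).

Lemma tors i z : evenz z -> Gm 0 i *~ z = 0.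
Proof.
move=> /eqP hz; rewrite (divz_eq z 2) hz addr0 -mulrzA_C.
have -> : Gm 0 i *~ 2 = 0.
  rewrite -hdiag; have h := hanti i i.
  by rewrite -pmulrn mulr2n {1}h addNr.
by rewrite mul0rz.
Qed.

Lemma gram (M : nat -> nat -> int) n :
  (forall k, (k < n)%N -> condM M k) ->
  \sum_(0 <= i < n) \sum_(0 <= j < n) Gm i j *~ M i j = 0.
Proof.
elim: n => [|n IH] hc; first by rewrite big_geq.
rewrite big_nat_recr //= (eq_bigr (fun i => \sum_(0 <= j < n) Gm i j *~ M i j + Gm i n *~ M i n)); last first.
  by move=> i _; rewrite big_nat_recr.
rewrite big_split /= IH; last by move=> k hk; apply: hc; apply: ltnW.
rewrite add0r big_nat_recr //=.
rewrite addrA -big_split /=.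
rewrite (eq_bigr (fun i => Gm i n *~ (M i n - M n i))); last first.
  by move=> i _; rewrite (hanti i n) mulNrz mulrzBr.
have := hc n (ltnSn n); case: n {IH hc} => [|n] /= hcn.
  by rewrite big_geq // add0r tors.
case/andP: hcn => hev /allP hall.
rewrite big_ltn // big_nat (eq_bigr (fun _ => 0)); last first.
  move=> i /andP[hi1 hi2]; have := hall i.
  rewrite mem_iota hi1 add1n hi2 => /(_ isT) /eqP ->.
  by rewrite subrr mulr0z.
rewrite big1 // addr0 hdiag -mulrzDr.
by apply: tors.
Qed.
End Gram.

Section Mach.
Variables (F : fieldType) (G : zmodType) (s : F -> F -> G) (hs : steinberg s).
Variable xs : seq F.
Hypothesis hx0 : nth 1 xs 0 = -1.
Hypothesis hxs : all (fun x => x != 0) xs.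

Definition atom (f : nat * bool) := if f.2 then nth 1 xs f.1 else (nth 1 xs f.1)^-1.
Definition evalf (fs : seq (nat * bool)) := foldr (fun f acc => atom f * acc) 1 fs.
Definition sg (f : nat * bool) : int := if f.2 then 1 else -1.
Definition Gm i j := s (nth 1 xs i) (nth 1 xs j).

Lemma nth_neq0 i : nth 1 xs i != 0.
Proof.
case: (ltnP i (size xs)) => hi; last by rewrite nth_default ?oner_eq0.
by apply: (allP hxs); rewrite mem_nth.
Qed.
Lemma atom_neq0 f : atom f != 0.
Proof. by rewrite /atom; case: f.2; rewrite ?invr_eq0 nth_neq0. Qed.
Lemma evalf_neq0 fs : evalf fs != 0.
Proof. by elim: fs => [|f fs IH] /=; rewrite ?oner_eq0 ?mulf_neq0 ?atom_neq0. Qed.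

Lemma s_atom_l f w : w != 0 -> s (atom f) w = s (nth 1 xs f.1) w *~ sg f.
Proof.
by move=> hw; rewrite /atom /sg; case: f.2; rewrite ?mulr1z ?mulrN1z ?sVl ?nth_neq0.
Qed.
Lemma s_atom_r f w : w != 0 -> s w (atom f) = s w (nth 1 xs f.1) *~ sg f.
Proof.
by move=> hw; rewrite /atom /sg; case: f.2; rewrite ?mulr1z ?mulrN1z ?sVr ?nth_neq0.
Qed.

Lemma sym_r w fs : w != 0 ->
  s w (evalf fs) = \sum_(f <- fs) s w (nth 1 xs f.1) *~ sg f.
Proof.
move=> hw; elim: fs => [|f fs IH] /=; first by rewrite big_nil s1r.
by rewrite sMr ?atom_neq0 ?evalf_neq0 // big_cons IH s_atom_r.
Qed.

Lemma sym_evalf fs1 fs2 : s (evalf fs1) (evalf fs2) =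
  \sum_(f1 <- fs1) \sum_(f2 <- fs2) Gm f1.1 f2.1 *~ (sg f1 * sg f2).
Proof.
elim: fs1 => [|f fs IH] /=; first by rewrite big_nil s1l ?evalf_neq0.
rewrite sMl ?atom_neq0 ?evalf_neq0 // big_cons IH s_atom_l ?evalf_neq0 //.
rewrite sym_r ?nth_neq0 // mulrz_suml; congr (_ + _); apply: eq_bigr => g _.
by rewrite mulrzA_C.
Qed.

Definition trip (ts : seq (int * seq (nat * bool) * seq (nat * bool))) : seq (nat * nat * int) :=
  flatten (map (fun t => flatten (map (fun f1 => map (fun f2 =>
     (f1.1, f2.1, t.1.1 * (sg f1 * sg f2))) t.2) t.1.2)) ts).

Lemma trip_sum ts :
  \sum_(t <- ts) s (evalf t.1.2) (evalf t.2) *~ t.1.1 =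
  \sum_(p <- trip ts) Gm p.1.1 p.1.2 *~ p.2.
Proof.
rewrite /trip big_flatten big_map /=; apply: eq_bigr => t _.
rewrite big_flatten big_map sym_evalf mulrz_suml; apply: eq_bigr => f1 _.
rewrite big_map mulrz_suml; apply: eq_bigr => f2 _ /=.
by rewrite mulrzA_C.
Qed.

Definition Mat (l : seq (nat * nat * int)) (i j : nat) : int :=
  foldr (fun p acc => (if (p.1.1 == i) && (p.1.2 == j) then p.2 else 0) + acc) 0 l.

Lemma tomat n l : all (fun p => (p.1.1 < n)%N && (p.1.2 < n)%N) l ->
  \sum_(p <- l) Gm p.1.1 p.1.2 *~ p.2 = \sum_(0 <= i < n) \sum_(0 <= j < n) Gm i j *~ Mat l i j.
Proof.
elim: l => [|p l IH] /=.
  rewrite big_nil big1 // => i _; rewrite big1 // => j _.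
case/andP=> /andP[h1 h2] hl; rewrite big_cons IH //.
rewrite !big_mkord.
rewrite [X in _ + X](eq_bigr (fun i : 'I_n => \sum_(j < n) Gm i j *~ Mat l i j)); last first.
  by move=> i _; rewrite big_mkord.
rewrite [in RHS](eq_bigr (fun i : 'I_n => \sum_(j < n) Gm i j *~ Mat (p :: l) i j)); last first.
  by move=> i _; rewrite big_mkord.
rewrite [in RHS](eq_bigr (fun i : 'I_n => \sum_(j < n) Gm i j *~ (if (p.1.1 == i) && (p.1.2 == j) then p.2 else 0)
   + \sum_(j < n) Gm i j *~ Mat l i j)); last first.
  by move=> i _; rewrite -big_split; apply: eq_bigr => j _; rewrite /Mat /= mulrzDr.
rewrite big_split /=; congr (_ + _).
rewrite (eq_bigr (fun i : 'I_n => if (i == p.1.1 :> nat) then \sum_(j < n) (if (j == p.1.2 :> nat) then Gm i j *~ p.2 else 0) else 0)); last first.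
  move=> i _; rewrite (eq_sym p.1.1); case: eqP => [e|hne] /=.
    apply: eq_bigr => j _; rewrite (eq_sym p.1.2).
    by case: eqP => _; rewrite ?mulr0z.
  by rewrite big1 // => j _; rewrite mulr0z.
rewrite -big_mkcond /= (big_ord1_eq _ (fun i => \sum_(j < n) (if j == p.1.2 :> nat then Gm i j *~ p.2 else 0))) h1.
by rewrite -big_mkcond /= (big_ord1_eq _ (fun j => Gm p.1.1 j *~ p.2)) h2.
Qed.

Definition checkM (n : nat) ts : bool :=
  let l := trip ts in
  all (fun p => (p.1.1 < n)%N && (p.1.2 < n)%N) l && all (condM (Mat l)) (iota 0 n).

Lemma machine ts : checkM (size xs) ts ->
  \sum_(t <- ts) s (evalf t.1.2) (evalf t.2) *~ t.1.1 = 0.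
Proof.
case/andP=> hb /allP hc; rewrite trip_sum (tomat hb).
apply: gram.
- by move=> i j; rewrite /Gm santi ?nth_neq0.
- move=> i; rewrite /Gm hx0.
  have h := sNself hs (nth_neq0 i).
  have e : - nth 1 xs i = nth 1 xs i * (-1) by rewrite mulrN1.
  rewrite e sMr ?oppr_eq0 ?oner_eq0 ?nth_neq0 // in h.
  move/eqP: h; rewrite addr_eq0 => /eqP ->.
  by rewrite (@santi _ _ _ hs (-1) (nth 1 xs i)) ?opprK ?oppr_eq0 ?oner_eq0 ?nth_neq0.
- by move=> k hk; apply: hc; rewrite mem_iota.
Qed.

Definition ssum (us : seq (int * F * F)) : G := \sum_(u <- us) s u.1.2 u.2 *~ u.1.1.

Lemma machine2 ts us : checkM (size xs) ts ->
  map (fun t => (t.1.1, evalf t.1.2, evalf t.2)) ts = us -> ssum us = 0.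
Proof. by move=> hc <-; rewrite /ssum big_map; apply: machine. Qed.
End Mach.

Section Ids.
Variables (F : fieldType) (G : zmodType) (s : F -> F -> G) (hs : steinberg s).

Lemma cocycle_gen (b01 b02 b03 b12 b13 b23 L0 L1 L2 L3 : F) :
  b01 != 0 -> b02 != 0 -> b03 != 0 -> b12 != 0 -> b13 != 0 -> b23 != 0 ->
  L0 != 0 -> L1 != 0 -> L2 != 0 -> L3 != 0 ->
  s ((b13/b23)*(L2/L1)) ((b12/(-b23))*(L3/L1))
 - s ((b03/b23)*(L2/L0)) ((b02/(-b23))*(L3/L0))
 + s ((b03/b13)*(L1/L0)) ((b01/(-b13))*(L3/L0))
 - s ((b02/b12)*(L1/L0)) ((b01/(-b12))*(L2/L0))
 = s (b02*b13/(b01*b23)) (-(b03*b12)/(b01*b23)).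
Proof.
move=> h01 h02 h03 h12 h13 h23 hL0 hL1 hL2 hL3.
pose xs := [:: -1; b01; b02; b03; b12; b13; b23; L0; L1; L2; L3].
pose ts : seq (int * seq (nat * bool) * seq (nat * bool)) :=
  [:: (1, [:: (5,true);(6,false);(9,true);(8,false)], [:: (4,true);(0,false);(6,false);(10,true);(8,false)]);
      (-1, [:: (3,true);(6,false);(9,true);(7,false)], [:: (2,true);(0,false);(6,false);(10,true);(7,false)]);
      (1, [:: (3,true);(5,false);(8,true);(7,false)], [:: (1,true);(0,false);(5,false);(10,true);(7,false)]);
      (-1, [:: (2,true);(4,false);(8,true);(7,false)], [:: (1,true);(0,false);(4,false);(9,true);(7,false)]);
      (-1, [:: (2,true);(5,true);(1,false);(6,false)], [:: (0,true);(3,true);(4,true);(1,false);(6,false)])].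
have hck : checkM (size xs) ts by vm_compute.
have hx0 : nth 1 xs 0 = -1 by [].
have hxs : all (fun x => x != 0) xs by rewrite /= oppr_eq0 oner_eq0 h01 h02 h03 h12 h13 h23 hL0 hL1 hL2 hL3.
have H : ssum s [:: (1, (b13/b23)*(L2/L1), (b12/(-b23))*(L3/L1));
   (-1, (b03/b23)*(L2/L0), (b02/(-b23))*(L3/L0));
   (1, (b03/b13)*(L1/L0), (b01/(-b13))*(L3/L0));
   (-1, (b02/b12)*(L1/L0), (b01/(-b12))*(L2/L0));
   (-1, b02*b13/(b01*b23), (-(b03*b12)/(b01*b23)))] = 0.
  apply: (machine2 hs hx0 hxs hck).
  rewrite /=; repeat (congr (_ :: _)); try congr (_, _, _); rewrite /atom /xs /=; field.
  all: try by rewrite ?oppr_eq0 ?oner_eq0 ?h01 ?h02 ?h03 ?h12 ?h13 ?h23 ?hL0 ?hL1 ?hL2 ?hL3.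
move: H; rewrite /ssum !big_cons big_nil /= !mulr1z !mulrN1z addr0 !addrA.
by move/eqP; rewrite subr_eq0 => /eqP.
Qed.

Ltac solve_args hyps :=
  rewrite /=; repeat (congr (_ :: _)); try congr (_, _, _); rewrite /atom /=; field;
  rewrite ?oppr_eq0 ?oner_eq0; hyps.

Lemma sd_gen (bim bkm bik bmk Lj Lj' Ll Ll' Ln : F) :
  bim != 0 -> bkm != 0 -> bik != 0 -> bmk != 0 ->
  Lj != 0 -> Lj' != 0 -> Ll != 0 -> Ll' != 0 -> Ln != 0 ->
  s ((bim/bkm)*(Ll/Lj)) ((bik/bmk)*(Ln/Lj))
 - s ((bim/bkm)*(Ll/Lj')) ((bik/bmk)*(Ln/Lj'))
 - s ((bim/bkm)*(Ll'/Lj)) ((bik/bmk)*(Ln/Lj))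
 + s ((bim/bkm)*(Ll'/Lj')) ((bik/bmk)*(Ln/Lj'))
 = s (Lj'/Lj) (Ll'/Ll).
Proof.
move=> h1 h2 h3 h4 h5 h6 h7 h8 h9.
pose xs := [:: -1; bim; bkm; bik; bmk; Lj; Lj'; Ll; Ll'; Ln].
pose ts : seq (int * seq (nat * bool) * seq (nat * bool)) :=
  [:: (1, [:: (1,true);(2,false);(7,true);(5,false)], [:: (3,true);(4,false);(9,true);(5,false)]);
      (-1, [:: (1,true);(2,false);(7,true);(6,false)], [:: (3,true);(4,false);(9,true);(6,false)]);
      (-1, [:: (1,true);(2,false);(8,true);(5,false)], [:: (3,true);(4,false);(9,true);(5,false)]);
      (1, [:: (1,true);(2,false);(8,true);(6,false)], [:: (3,true);(4,false);(9,true);(6,false)]);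
      (-1, [:: (6,true);(5,false)], [:: (8,true);(7,false)])].
have hck : checkM (size xs) ts by vm_compute.
have hx0 : nth 1 xs 0 = -1 by [].
have hxs : all (fun x => x != 0) xs by rewrite /= oppr_eq0 oner_eq0 h1 h2 h3 h4 h5 h6 h7 h8 h9.
have H : ssum s [:: (1, (bim/bkm)*(Ll/Lj), (bik/bmk)*(Ln/Lj));
   (-1, (bim/bkm)*(Ll/Lj'), (bik/bmk)*(Ln/Lj'));
   (-1, (bim/bkm)*(Ll'/Lj), (bik/bmk)*(Ln/Lj));
   (1, (bim/bkm)*(Ll'/Lj'), (bik/bmk)*(Ln/Lj'));
   (-1, Lj'/Lj, Ll'/Ll)] = 0.
  apply: (machine2 hs hx0 hxs hck).
  rewrite /=; repeat (congr (_ :: _)); try congr (_, _, _); rewrite /atom /xs /=; field.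
  all: try by rewrite ?oppr_eq0 ?oner_eq0 ?h1 ?h2 ?h3 ?h4 ?h5 ?h6 ?h7 ?h8 ?h9.
move: H; rewrite /ssum !big_cons big_nil /= !mulr1z !mulrN1z addr0 !addrA.
by move/eqP; rewrite subr_eq0 => /eqP.
Qed.

Lemma altB_gen (bik bim bkm Lp Lq Lr : F) :
  bik != 0 -> bim != 0 -> bkm != 0 -> Lp != 0 -> Lq != 0 -> Lr != 0 ->
  s ((bim/bkm)*(Lq/Lp)) ((bik/(-bkm))*(Lr/Lp)) =
  - s ((bkm/bim)*(Lp/Lq)) (((-bik)/(-bim))*(Lr/Lq)).
Proof.
move=> h1 h2 h3 h4 h5 h6.
pose xs := [:: -1; bik; bim; bkm; Lp; Lq; Lr].
pose ts : seq (int * seq (nat * bool) * seq (nat * bool)) :=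
  [:: (1, [:: (2,true);(3,false);(5,true);(4,false)], [:: (1,true);(0,false);(3,false);(6,true);(4,false)]);
      (1, [:: (3,true);(2,false);(4,true);(5,false)], [:: (0,true);(1,true);(0,false);(2,false);(6,true);(5,false)])].
have hck : checkM (size xs) ts by vm_compute.
have hx0 : nth 1 xs 0 = -1 by [].
have hxs : all (fun x => x != 0) xs by rewrite /= oppr_eq0 oner_eq0 h1 h2 h3 h4 h5 h6.
have H : ssum s [:: (1, (bim/bkm)*(Lq/Lp), (bik/(-bkm))*(Lr/Lp));
   (1, (bkm/bim)*(Lp/Lq), ((-bik)/(-bim))*(Lr/Lq))] = 0.
  apply: (machine2 hs hx0 hxs hck).
  rewrite /=; repeat (congr (_ :: _)); try congr (_, _, _); rewrite /atom /xs /=; field.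
  all: try by rewrite ?oppr_eq0 ?oner_eq0 ?h1 ?h2 ?h3 ?h4 ?h5 ?h6.
move: H; rewrite /ssum !big_cons big_nil /= !mulr1z addr0.
by move/eqP; rewrite addr_eq0 => /eqP.
Qed.

Lemma rexp_gen (Lj Lk L1 Lm Ln L1' : F) :
  Lj != 0 -> Lk != 0 -> L1 != 0 -> Lm != 0 -> Ln != 0 -> L1' != 0 ->
  s (Lj/Lk) (Lm/Ln) = s (Lj/L1) (Lm/L1') - s (Lk/L1) (Lm/L1')
     - s (Lj/L1) (Ln/L1') + s (Lk/L1) (Ln/L1').
Proof.
move=> h1 h2 h3 h4 h5 h6.
pose xs := [:: -1; Lj; Lk; L1; Lm; Ln; L1'].
pose ts : seq (int * seq (nat * bool) * seq (nat * bool)) :=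
  [:: (1, [:: (1,true);(3,false)], [:: (4,true);(6,false)]);
      (-1, [:: (2,true);(3,false)], [:: (4,true);(6,false)]);
      (-1, [:: (1,true);(3,false)], [:: (5,true);(6,false)]);
      (1, [:: (2,true);(3,false)], [:: (5,true);(6,false)]);
      (-1, [:: (1,true);(2,false)], [:: (4,true);(5,false)])].
have hck : checkM (size xs) ts by vm_compute.
have hx0 : nth 1 xs 0 = -1 by [].
have hxs : all (fun x => x != 0) xs by rewrite /= oppr_eq0 oner_eq0 h1 h2 h3 h4 h5 h6.
have H : ssum s [:: (1, Lj/L1, Lm/L1'); (-1, Lk/L1, Lm/L1');
   (-1, Lj/L1, Ln/L1'); (1, Lk/L1, Ln/L1'); (-1, Lj/Lk, Lm/Ln)] = 0.
  apply: (machine2 hs hx0 hxs hck).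
  rewrite /=; repeat (congr (_ :: _)); try congr (_, _, _); rewrite /atom /xs /=; field.
  all: try by rewrite ?oppr_eq0 ?oner_eq0 ?h1 ?h2 ?h3 ?h4 ?h5 ?h6.
move: H; rewrite /ssum !big_cons big_nil /= !mulr1z !mulrN1z addr0 !addrA.
by move/eqP; rewrite subr_eq0 => /eqP ->.
Qed.

Lemma swap_gen (Lj L1 Lm L1' : F) :
  Lj != 0 -> L1 != 0 -> Lm != 0 -> L1' != 0 ->
  s (Lj/L1) (Lm/L1') = s (L1/Lj) (L1'/Lm).
Proof.
move=> h1 h2 h3 h4.
have e1 : Lj / L1 != 0 by rewrite mulf_neq0 ?invr_eq0.
have e2 : Lm / L1' != 0 by rewrite mulf_neq0 ?invr_eq0.
by rewrite -(invf_div Lj L1) -(invf_div Lm L1') sVl ?invr_eq0 // (sVr _ e2) // opprK.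
Qed.
End Ids.

Lemma LF_neq0 (K F : fieldType) (iota : {rmorphism K -> F})
  (N : nat) (Ns : nat -> nat) (a b : nat -> K) (c : nat -> nat -> K) (lam : K)
  (x y : F) (hf : eval2 iota x y (fpoly a b c N Ns lam) = 0) :
  forall i j, (1 <= i <= N)%N -> (1 <= j <= Ns i)%N -> LF iota a b c x y i j != 0.
Proof.
pose E0 := (horner_eval x \o map_poly iota : {rmorphism {poly K} -> F}).
pose E := (horner_eval y \o map_poly E0 : {rmorphism {poly {poly K}} -> F}).
have eE : forall p, eval2 iota x y p = E p by [].
have EC : forall k : K, E k%:P%:P = iota k.
  by move=> k; rewrite /E /= map_polyC horner_evalE hornerC /= horner_evalE map_polyC hornerC.
have EX : E 'X = y by rewrite /E /= map_polyX horner_evalE hornerX.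
have EXi : E ('X)%:P = x.
  by rewrite /E /= map_polyC horner_evalE hornerC /= horner_evalE map_polyX hornerX.
have EL : forall i j, E (Lpoly a b c i j) = LF iota a b c x y i j.
  move=> i j; rewrite /Lpoly /LF polyCD polyCM !rmorphD !rmorphM EX !EC EXi.
  by rewrite -addrA (addrC (iota (c i j))) addrA.
move: hf; rewrite eE /fpoly rmorphB rmorphM rmorph1 EC rmorph_prod /=.
move/eqP; rewrite subr_eq0 => /eqP hP.
have hP0 : \prod_(1 <= i < N.+1) E (\prod_(1 <= j < (Ns i).+1) Lpoly a b c i j) != 0.
  apply/eqP => h; move: hP; rewrite h mulr0 => /eqP; by rewrite eq_sym oner_eq0.
move=> i j /andP[hi1 hiN] /andP[hj1 hjN].
move: hP0; rewrite prodf_seq_neq0 => /allP /(_ i).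
rewrite mem_index_iota hi1 ltnS hiN => /(_ isT).
rewrite rmorph_prod prodf_seq_neq0 => /allP /(_ j).
by rewrite mem_index_iota hj1 ltnS hjN EL => /(_ isT).
Qed.

Lemma solveA (G : zmodType) (A B C D : G) : A - B + C - D = 0 -> A = B - C + D.
Proof. by move=> h; apply/eqP; rewrite -subr_eq0 -[X in _ == X]h !opprD !opprK !addrA. Qed.
Lemma solveB (G : zmodType) (A B C D : G) : A - B + C - D = 0 -> B = A + C - D.
Proof.
move=> h; apply/eqP; rewrite eq_sym -subr_eq0 -[X in _ == X]h.
by rewrite (addrAC A (- B)) (addrAC _ (- B)).
Qed.
Lemma solveC (G : zmodType) (A B C D E : G) : A - B - C + D = E -> A = E + B + C - D.
Proof.
move=> <-; rewrite (addrAC (A - B - C) D B) (addrAC _ D C) addrK.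
by rewrite (addrAC (A - B) (- C) B) addrNK addrNK.
Qed.

Theorem proposition3p2
  (K F : fieldType) (iota : {rmorphism K -> F})
  (N : nat) (Ns : nat -> nat) (a b : nat -> K) (c : nat -> nat -> K) (lam : K)
  (x y : F)
  (hN : (2 <= N)%N)
  (hNs : forall i, (1 <= i <= N)%N -> (1 <= Ns i)%N)
  (hab : forall i, (1 <= i <= N)%N -> (a i, b i) != (0, 0))
  (hbr : forall i k, (1 <= i <= N)%N -> (1 <= k <= N)%N -> i != k -> br a b i k != 0)
  (hdist : forall i j k l, (1 <= i <= N)%N -> (1 <= j <= Ns i)%N ->
     (1 <= k <= N)%N -> (1 <= l <= Ns k)%N -> (i, j) != (k, l) ->
     ~ (exists mu : K, [/\ a i = mu * a k, b i = mu * b k & c i j = mu * c k l]))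
  (hlam : lam != 0)
  (* F is the function field of the curve f = 0, generated by x, y *)
  (hf : eval2 iota x y (fpoly a b c N Ns lam) = 0)
  (hker : forall p, eval2 iota x y p = 0 ->
     exists q, p = q * fpoly a b c N Ns lam)
  (hgen : forall z : F, exists p q,
     eval2 iota x y q != 0 /\ z = eval2 iota x y p / eval2 iota x y q)
  (G : zmodType) (s : F -> F -> G) (hs : steinberg s) :
  let R := Rsym iota a b c x y s in
  let T := Tsym iota a b c x y s in
  let allgens := fun v : G =>
    (exists i j k l m n,
       [&& (1 <= i <= N)%N, (1 <= l <= N)%N, i != l,
           (1 <= j <= Ns i)%N, (1 <= k <= Ns i)%N,
           (1 <= m <= Ns l)%N & (1 <= n <= Ns l)%N] /\ v = R i j k l m n)
    \/
    (exists i j k l m n,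
       [&& (1 <= i <= N)%N, (1 <= k <= N)%N, (1 <= m <= N)%N,
           i != k, k != m, i != m,
           (1 <= j <= Ns i)%N, (1 <= l <= Ns k)%N &
           (1 <= n <= Ns m)%N] /\ v = T i j k l m n) in
  let smallgens := fun v : G =>
    [\/ (exists j m,
           [/\ (1 < j <= Ns 1)%N, (1 < m <= Ns 2)%N & v = R 1%N 1%N j 2%N 1%N m]),
        (exists k l m n,
           [/\ (2 <= k)%N, (k < m <= N)%N, (1 <= l <= Ns k)%N,
               (1 <= n <= Ns m)%N & v = T 1%N 1%N k l m n])
      | (exists j m n,
           [/\ (2 <= j <= Ns 1)%N, (3 <= m <= N)%N,
               (1 <= n <= Ns m)%N & v = T 1%N j 2%N 1%N m n])] in
  forall v : G, in_span allgens v <-> in_span smallgens v.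
Proof.
move=> R T allgens smallgens.
set L := LF iota a b c x y.
have hL : forall i j, (1 <= i <= N)%N -> (1 <= j <= Ns i)%N -> L i j != 0.
  exact: (LF_neq0 hf).
have hB : forall i k, (1 <= i <= N)%N -> (1 <= k <= N)%N -> i != k -> iota (br a b i k) != 0.
  by move=> i k hi hk hik; rewrite fmorph_eq0 hbr.
have brN : forall i k, br a b i k = - br a b k i by move=> i k; rewrite /br; ring.
set P := in_span smallgens.
have P0 : P 0 by exists [::]; split => //; rewrite big_nil.
have PD : forall u w, P u -> P w -> P (u + w).
  move=> u w [t1 [h1 ->]] [t2 [h2 ->]]; exists (t1 ++ t2); split; last by rewrite big_cat.
  by move=> p; rewrite mem_cat => /orP [/h1|/h2].
have PZ : forall u z, P u -> P (u *~ z).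
  move=> u z [t [ht ->]]; exists (map (fun p => (p.1 * z, p.2)) t); split.
    by move=> p /mapP [q /ht hq ->].
  by rewrite big_map mulrz_suml; apply: eq_bigr => p _; rewrite mulrzA.
have PN : forall u, P u -> P (- u) by move=> u hu; rewrite -mulrN1z; apply: (PZ).
have PB : forall u w, P u -> P w -> P (u - w) by move=> u w hu hw; apply: (PD) => //; apply: (PN).
have PG : forall g, smallgens g -> P g.
  move=> g hg; exists [:: (1, g)]; split; first by move=> p; rewrite inE => /eqP ->.
  by rewrite big_cons big_nil addr0 mulr1z.
have TE : forall i j k l m n, T i j k l m n =
   s ((iota (br a b i m) / iota (br a b k m)) * (L k l / L i j))
     ((iota (br a b i k) / iota (br a b m k)) * (L m n / L i j)).
  by move=> i j k l m n; rewrite /T /Tsym !fmorph_div.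
have altA : forall i j k l m n, (1 <= i <= N)%N -> (1 <= k <= N)%N -> (1 <= m <= N)%N ->
    i != k -> k != m -> i != m ->
    (1 <= j <= Ns i)%N -> (1 <= l <= Ns k)%N -> (1 <= n <= Ns m)%N ->
    T i j k l m n = - T i j m n k l.
  move=> i j k l m n hi hk hm hik hkm him hj hl hn; rewrite !TE.
  apply: (santi hs).
    by rewrite !mulf_neq0 ?invr_eq0 ?hL ?hB // eq_sym.
  by rewrite !mulf_neq0 ?invr_eq0 ?hL ?hB // eq_sym.
have altB : forall i j k l m n, (1 <= i <= N)%N -> (1 <= k <= N)%N -> (1 <= m <= N)%N ->
    i != k -> k != m -> i != m ->
    (1 <= j <= Ns i)%N -> (1 <= l <= Ns k)%N -> (1 <= n <= Ns m)%N ->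
    T i j k l m n = - T k l i j m n.
  move=> i j k l m n hi hk hm hik hkm him hj hl hn; rewrite !TE.
  rewrite (brN m k) (brN k i) (brN m i) !rmorphN.
  by apply: altB_gen => //; rewrite ?hL ?hB.
have sd : forall i j j' k l l' m n, (1 <= i <= N)%N -> (1 <= k <= N)%N -> (1 <= m <= N)%N ->
    i != k -> k != m -> i != m ->
    (1 <= j <= Ns i)%N -> (1 <= j' <= Ns i)%N -> (1 <= l <= Ns k)%N -> (1 <= l' <= Ns k)%N ->
    (1 <= n <= Ns m)%N ->
    T i j k l m n - T i j' k l m n - T i j k l' m n + T i j' k l' m n = s (L i j' / L i j) (L k l' / L k l).
  move=> i j j' k l l' m n hi hk hm hik hkm him hj hj' hl hl' hn; rewrite !TE.
  by apply: sd_gen => //; rewrite ?hL ?hB // eq_sym.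
have coc : forall d0 j0 d1 j1 d2 j2 d3 j3,
    (1 <= d0 <= N)%N -> (1 <= d1 <= N)%N -> (1 <= d2 <= N)%N -> (1 <= d3 <= N)%N ->
    d0 != d1 -> d0 != d2 -> d0 != d3 -> d1 != d2 -> d1 != d3 -> d2 != d3 ->
    (1 <= j0 <= Ns d0)%N -> (1 <= j1 <= Ns d1)%N -> (1 <= j2 <= Ns d2)%N -> (1 <= j3 <= Ns d3)%N ->
    T d1 j1 d2 j2 d3 j3 - T d0 j0 d2 j2 d3 j3 + T d0 j0 d1 j1 d3 j3 - T d0 j0 d1 j1 d2 j2 = 0.
  move=> d0 j0 d1 j1 d2 j2 d3 j3 h0 h1 h2 h3 h01 h02 h03 h12 h13 h23 hj0 hj1 hj2 hj3.
  rewrite !TE (brN d3 d2) (brN d3 d1) (brN d2 d1) !rmorphN.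
  rewrite cocycle_gen //; try by rewrite ?hL ?hB.
  set b01 := iota (br a b d0 d1); set b02 := iota (br a b d0 d2); set b03 := iota (br a b d0 d3).
  set b12 := iota (br a b d1 d2); set b13 := iota (br a b d1 d3); set b23 := iota (br a b d2 d3).
  have nz01 : b01 != 0 by rewrite hB.
  have nz02 : b02 != 0 by rewrite hB.
  have nz03 : b03 != 0 by rewrite hB.
  have nz12 : b12 != 0 by rewrite hB.
  have nz13 : b13 != 0 by rewrite hB.
  have nz23 : b23 != 0 by rewrite hB.
  have pl : b02 * b13 = b01 * b23 + b03 * b12.
    rewrite /b01 /b02 /b03 /b12 /b13 /b23 -!rmorphM -rmorphD; congr (iota _); rewrite /br; ring.
  have e : - (b03 * b12) / (b01 * b23) = 1 - b02 * b13 / (b01 * b23).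
    rewrite pl; field; by rewrite nz01 nz23.
  have hu0 : b02 * b13 / (b01 * b23) != 0 by rewrite !mulf_neq0 ?invr_eq0 ?mulf_neq0.
  have hu1 : b02 * b13 / (b01 * b23) != 1.
    apply/negP => /eqP hh; move: e; rewrite hh subrr => /eqP.
    by rewrite mulf_eq0 invr_eq0 oppr_eq0 !mulf_eq0 (negPf nz03) (negPf nz12) (negPf nz01) (negPf nz23).
  by rewrite e s1m.
have hNs1 : (1 <= 1 <= Ns 1)%N by rewrite /= hNs //=; lia.
have hNs2 : (1 <= 1 <= Ns 2)%N by rewrite /= hNs //=; lia.
have PT2 : forall i j k l m n, (2 <= i)%N -> (i < k)%N -> (k < m)%N -> (m <= N)%N ->
   (1 <= j <= Ns i)%N -> (1 <= l <= Ns k)%N -> (1 <= n <= Ns m)%N -> P (T i j k l m n).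
  move=> i j k l m n h2i hik hkm hmN hj hl hn.
  rewrite (solveA (coc 1 1 i j k l m n _ _ _ _ _ _ _ _ _ _ hNs1 hj hl hn)); try lia.
  apply: (PD); first apply: (PB).
  - by apply: (PG); apply: Or32; exists k, l, m, n; split => //; lia.
  - by apply: (PG); apply: Or32; exists i, j, m, n; split => //; lia.
  - by apply: (PG); apply: Or32; exists i, j, k, l; split => //; lia.
have PTs : forall i j k l m n, (1 <= i)%N -> (i < k)%N -> (k < m)%N -> (m <= N)%N ->
   (1 <= j <= Ns i)%N -> (1 <= l <= Ns k)%N -> (1 <= n <= Ns m)%N -> P (T i j k l m n).
  move=> i j k l m n h1i hik hkm hmN hj hl hn.
  case: (ltnP 1 i) => hi1; first by apply: (PT2).
  have ? : i = 1%N by lia.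
  subst i.
  case: (ltnP 1 j) => hj1; last first.
    have ? : j = 1%N by lia.
    subst j.
    by apply: (PG); apply: Or32; exists k, l, m, n; split => //; lia.
  case: (ltnP 2 k) => hk2.
    rewrite (solveB (coc 1 j 2 1 k l m n _ _ _ _ _ _ _ _ _ _ hj hNs2 hl hn)); try lia.
    apply: (PB); first apply: (PD).
    - by apply: (PT2) => //; lia.
    - by apply: (PG); apply: Or33; exists j, m, n; split => //; lia.
    - by apply: (PG); apply: Or33; exists j, k, l; split => //; lia.
  have ? : k = 2%N by lia.
  subst k.
  case: (ltnP 1 l) => hl1; last first.
    have ? : l = 1%N by lia.
    subst l.
    by apply: (PG); apply: Or33; exists j, m, n; split => //; lia.
  rewrite (solveC (sd 1 j 1 2 l 1 m n _ _ _ _ _ _ hj hNs1 hl hNs2 hn)); try lia.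
  apply: (PB); first (apply: (PD); first apply: (PD)).
  - by apply: (PG); apply: Or31; exists j, l; split => //; lia.
  - by apply: (PG); apply: Or32; exists 2%N, l, m, n; split => //; lia.
  - by apply: (PG); apply: Or33; exists j, m, n; split => //; lia.
  - by apply: (PG); apply: Or32; exists 2%N, 1%N, m, n; split => //; lia.
have PTall : forall i j k l m n, (1 <= i <= N)%N -> (1 <= k <= N)%N -> (1 <= m <= N)%N ->
    i != k -> k != m -> i != m ->
    (1 <= j <= Ns i)%N -> (1 <= l <= Ns k)%N -> (1 <= n <= Ns m)%N -> P (T i j k l m n).
  move=> i j k l m n hi hk hm hik hkm him hj hl hn.
  case: (ltngtP i k) => [h1|h1|h1]; last by move/eqP: hik.
  - case: (ltngtP k m) => [h2|h2|h2]; last by move/eqP: hkm.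
    + by apply: (PTs) => //; lia.
    + rewrite (altA i j k l m n) //; apply: (PN).
      case: (ltngtP i m) => [h3|h3|h3]; last by move/eqP: him.
      * by apply: (PTs) => //; lia.
      * rewrite (altB i j m n k l) //; try by rewrite eq_sym.
        by apply: (PN); apply: (PTs) => //; lia.
  - case: (ltngtP i m) => [h3|h3|h3]; last by move/eqP: him.
    + rewrite (altB i j k l m n) //; apply: (PN).
      by apply: (PTs) => //; lia.
    + case: (ltngtP k m) => [h2|h2|h2]; last by move/eqP: hkm.
      * rewrite (altB i j k l m n) // (altA k l i j m n) // ?opprK; try by rewrite eq_sym.
        by apply: (PTs) => //; lia.
      * rewrite (altB i j k l m n) // (altA k l i j m n) // ?opprK; try by rewrite eq_sym.
        rewrite (altB k l m n i j) //; try by rewrite eq_sym.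
        by apply: (PN); apply: (PTs) => //; lia.
have Pr_t : forall i j l m t, (1 <= i <= N)%N -> (1 <= l <= N)%N -> (1 <= t <= N)%N ->
    i != l -> l != t -> i != t -> (1 <= t <= 2)%N ->
    (1 <= j <= Ns i)%N -> (1 <= m <= Ns l)%N -> P (R i j 1 l m 1).
  move=> i j l m t hi hl ht hil hlt hit ht2 hj hm.
  have htt : (1 <= 1 <= Ns t)%N by case: t {hlt hit ht} ht2 => [|[|[|]]] //.
  have hi1 : (1 <= 1 <= Ns i)%N by rewrite /= hNs.
  have hl1 : (1 <= 1 <= Ns l)%N by rewrite /= hNs.
  have -> : R i j 1%N l m 1%N = T i 1 l 1 t 1 - T i j l 1 t 1 - T i 1 l m t 1 + T i j l m t 1.
    by rewrite (sd i 1 j l 1 m t 1).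
  apply: (PD); first (apply: (PB); first apply: (PB)); by apply: (PTall).
have Pr : forall i j l m, (1 <= i <= N)%N -> (1 <= l <= N)%N -> i != l ->
    (1 <= j <= Ns i)%N -> (1 <= m <= Ns l)%N -> P (R i j 1 l m 1).
  move=> i j l m hi hl hil hj hm.
  have hi1 : (1 <= 1 <= Ns i)%N by rewrite /= hNs.
  have hl1 : (1 <= 1 <= Ns l)%N by rewrite /= hNs.
  case: (ltnP 1 j) => hj1; last first.
    have ? : j = 1%N by lia.
    subst j; rewrite /R /Rsym divff ?s1l //; last by rewrite hL.
    by rewrite mulf_neq0 ?invr_eq0 ?hL.
  case: (ltnP 1 m) => hm1; last first.
    have ? : m = 1%N by lia.
    subst m; rewrite /R /Rsym divff ?s1r //; last by rewrite hL.
    by rewrite mulf_neq0 ?invr_eq0 ?hL.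
  have [[e1 e2]|[e1 e2]|hne] : [\/ i = 1%N /\ l = 2%N, i = 2%N /\ l = 1%N | ~~ ((i == 1%N) && (l == 2%N)) && ~~ ((i == 2%N) && (l == 1%N))].
  - case: (boolP ((i == 1%N) && (l == 2%N))) => [/andP[/eqP -> /eqP ->]|h1]; first by apply: Or31.
    case: (boolP ((i == 2%N) && (l == 1%N))) => [/andP[/eqP -> /eqP ->]|h2]; first by apply: Or32.
    by apply: Or33; apply/andP.
  - subst i l; apply: (PG); apply: Or31; exists j, m; split => //; try lia.
    by rewrite /R /Rsym (swap_gen hs) ?hL.
  - subst i l; have -> : R 2%N j 1%N 1%N m 1%N = - R 1%N 1%N m 2%N 1%N j.
      rewrite /R /Rsym -(swap_gen hs) ?hL // (santi hs) // mulf_neq0 ?invr_eq0 ?hL //.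
    apply: (PN); apply: (PG); apply: Or31; exists m, j; split => //; lia.
  - case/andP: hne => hne1 hne2.
    case: (boolP ((i != 1%N) && (l != 1%N))) => hc.
      by apply: (Pr_t i j l m 1%N) => //; lia.
    by apply: (Pr_t i j l m 2%N) => //; lia.
have PR : forall i j k l m n, (1 <= i <= N)%N -> (1 <= l <= N)%N -> i != l ->
    (1 <= j <= Ns i)%N -> (1 <= k <= Ns i)%N -> (1 <= m <= Ns l)%N -> (1 <= n <= Ns l)%N ->
    P (R i j k l m n).
  move=> i j k l m n hi hl hil hj hk hm hn.
  have hi1 : (1 <= 1 <= Ns i)%N by rewrite /= hNs.
  have hl1 : (1 <= 1 <= Ns l)%N by rewrite /= hNs.
  have -> : R i j k l m n = R i j 1 l m 1 - R i k 1 l m 1 - R i j 1 l n 1 + R i k 1 l n 1.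
    by rewrite /R /Rsym (rexp_gen hs (L1 := L i 1%N) (L1' := L l 1%N)) ?hL.
  apply: (PD); first (apply: (PB); first apply: (PB)); by apply: (Pr).
have Pmain : forall g, allgens g -> P g.
  move=> g [[i [j [k [l [m [n [hc ->]]]]]]]|[i [j [k [l [m [n [hc ->]]]]]]]].
    case/and5P: hc => hi hl hil hj /andP [hk /andP [hm hn]].
    by apply: (PR).
  case/and5P: hc => hi hk hm hik /and5P [hkm him hj hl hn].
  by apply: (PTall).
move=> v; split.
  case=> t [ht ->]; elim: t ht => [|p t IH] ht; first by rewrite big_nil.
  rewrite big_cons; apply: (PD).
    by apply: (PZ); apply: Pmain; apply: ht; rewrite inE eqxx.
  by apply: IH => q hq; apply: ht; rewrite inE hq orbT.
case=> t [ht ->]; exists t; split => // p /ht [].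
- move=> [j [m [hj hm ->]]]; left; exists 1%N, 1%N, j, 2%N, 1%N, m; split => //.
  have := hNs 1%N; have := hNs 2%N; lia.
- move=> [k [l [m [n [hk hkm hl hn ->]]]]]; right; exists 1%N, 1%N, k, l, m, n; split => //; lia.
- move=> [j [m [n [hj hm hn ->]]]]; right; exists 1%N, j, 2%N, 1%N, m, n; split => //.
  have := hNs 2%N; lia.
Qed.
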